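(* Let $n\geq 1$ and let $C_n\subset A^n$ be an arbitrary nonempty set. Write $D=E_{P^n}[\rho_n(X_1^n,C_n)]$, where $X_1^n=(X_1,\dots,X_n)$ has the product distribution $P^n$. Then $$\frac{1}{n}\log M^n(C_n)\geq R(D).$$
   Context: Setting: $A$ is a finite set; $P$ is a probability mass function on $A$ with $P(a)>0$ for all $a\in A$; $\rho:A\times A\to[0,\infty)$ is a function such that for each $a\in A$ there is $b\in A$ with $\rho(a,b)=0$; $M:A\to(0,\infty)$ is an arbitrary positive ''mass'' function. For $n\geq1$ and $x_1^n=(x_1,\dots,x_n),y_1^n\in A^n$, $\rho_n(x_1^n,y_1^n)=\frac1n\sum_{i=1}^n\rho(x_i,y_i)$; $M^n(y_1^n)=\prod_{i=1}^n M(y_i)$ and $M^n(C)=\sum_{y_1^n\in C}M^n(y_1^n)$ for $C\subset A^n$; $P^n$ is the product distribution on $A^n$. For $C\subset A^n$, $\rho_n(x_1^n,C)=\min_{y_1^n\in C}\rho_n(x_1^n,y_1^n)$. Logarithms are natural. For probability mass functions $\mu,\nu$ on a finite set $S$, $H(\mu\|\nu)=\sum_s\mu(s)\log\frac{\mu(s)}{\nu(s)}$. For a probability measure $Q$ on $A$ and $D\geq0$, ${\cal M}(P,Q,D)$ is the set of probability measures $W$ on $A\times A$ with first marginal $P$, second marginal $Q$, and $E_W[\rho(X,Y)]\leq D$; $I(P,Q,D)=\inf_{W\in{\cal M}(P,Q,D)}H(W\|P\times Q)$ (equal to $+\infty$ if the set is empty). The rate function is $R(D)=R(D;P,M)=\inf_Q\{I(P,Q,D)+E_Q[\log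 M(Y)]\}$, the infimum over all probability distributions $Q$ on $A$; equivalently $R(D)=\inf\{I(X;Y)+E[\log M(Y)]\}$ over jointly distributed $(X,Y)$ with $X\sim P$ and $E\rho(X,Y)\le D$, where $I(X;Y)$ is mutual information. *)

(* Defs.v *)
From mathcomp Require Import all_boot all_order all_algebra.
From mathcomp Require Import all_classical all_reals all_analysis.
Set Implicit Arguments. Unset Strict Implicit. Unset Printing Implicit Defensive.
Import Order.TTheory GRing.Theory Num.Theory.
Local Open Scope ring_scope.
Local Open Scope classical_set_scope.

Section Defs.
Variable R : realType.

Definition is_pmf (S : finType) (mu : S -> R) : Prop :=
  (forall s, 0 <= mu s) /\ \sum_s mu s = 1.

Definition KL (S : finType) (mu nu : S -> R) : R :=
  \sum_s (if mu s == 0 then 0 else mu s * ln (mu s / nu s)).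

Variable A : finType.

Definition couplings (rho : A -> A -> R) (P Q : A -> R) (D : R) : set (A * A -> R) :=
  [set W | is_pmf W
         /\ (forall a, \sum_b W (a, b) = P a)
         /\ (forall b, \sum_a W (a, b) = Q b)
         /\ \sum_ab W ab * rho ab.1 ab.2 <= D].

(* I(P,Q,D) = inf_{W in M(P,Q,D)} H(W || P x Q)  (+oo if empty) *)
Definition Irate (rho : A -> A -> R) (P Q : A -> R) (D : R) : \bar R :=
  ereal_inf [set (KL W (fun ab => P ab.1 * Q ab.2))%:E | W in couplings rho P Q D].

Definition Rrate (rho : A -> A -> R) (P M : A -> R) (D : R) : \bar R :=
  ereal_inf [set (Irate rho P Q D + (\sum_b Q b * ln (M b))%:E)%E
            | Q in [set Q : A -> R | is_pmf Q]].

Definition rhon (rho : A -> A -> R) (n : nat) (x y : n.-tuple A) : R :=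
  n%:R^-1 * \sum_(i < n) rho (tnth x i) (tnth y i).

Definition rhon_set (rho : A -> A -> R) (n : nat) (x : n.-tuple A)
    (C : {set n.-tuple A}) : R :=
  inf [set rhon rho x y | y in [set y : n.-tuple A | y \in C]].

Definition prodn (P : A -> R) (n : nat) (x : n.-tuple A) : R :=
  \prod_(i < n) P (tnth x i).

Definition massn (M : A -> R) (n : nat) (C : {set n.-tuple A}) : R :=
  \sum_(y in C) prodn M y.

Definition exp_dist (rho : A -> A -> R) (P : A -> R) (n : nat)
    (C : {set n.-tuple A}) : R :=
  \sum_(x : n.-tuple A) prodn P x * rhon_set rho x C.

End Defs.

(* Main.v *)
Require Import Defs.
From mathcomp Require Import all_boot all_order all_algebra.
From mathcomp Require Import all_classical all_reals all_analysis.
From mathcomp Require Import ring lra.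
Set Implicit Arguments. Unset Strict Implicit. Unset Printing Implicit Defensive.
Import Order.TTheory GRing.Theory Num.Theory.
Local Open Scope ring_scope.

Section Gen.
Variable R : realType.

Lemma ln_le_sub1 (x : R) : 0 < x -> ln x <= x - 1.
Proof.
move=> x0; have H := @le_ln1Dx R (x - 1).
rewrite addrCA subrr addr0 in H; apply: H; lra.
Qed.

Lemma ln_prod (I : finType) (F : I -> R) : (forall i, 0 < F i) ->
  ln (\prod_i F i) = \sum_i ln (F i).
Proof.
move=> Fp.
pose K := fun x y : R => 0 < x /\ ln x = y.
suff : K (\prod_i F i) (\sum_i ln (F i)) by case.
apply: (big_rec2 K); first by split; [lra| exact: ln1].
move=> i x y _ [x0 <-]; split; first exact: mulr_gt0.
by rewrite lnM // posrE.
Qed.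

Lemma jensen_ln (T : finType) (p g : T -> R) :
  (forall t, 0 < p t) -> \sum_t p t = 1 -> (forall t, 0 < g t) ->
  \sum_t p t * ln (g t) <= ln (\sum_t p t * g t).
Proof.
move=> pp p1 gp.
have [t0 _|h] := pickP (fun _ : T => true); last first.
  by move: p1; rewrite big_pred0 // => /eqP; rewrite eq_sym oner_eq0.
set S := \sum_t p t * g t.
have S0 : 0 < S.
  rewrite /S (bigD1 t0) //=; apply: ltr_pwDl; first exact: mulr_gt0.
  by apply: sumr_ge0 => t _; apply: mulr_ge0; apply: ltW.
rewrite -subr_le0.
have -> : ln S = \sum_t p t * ln S by rewrite -mulr_suml p1 mul1r.
rewrite -sumrB.
apply: (le_trans (y := \sum_t p t * (g t / S - 1))).
  apply: ler_sum => t _; rewrite -mulrBr; apply: ler_wpM2l; first exact: ltW.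
  by rewrite -ln_div ?posrE //; apply: ln_le_sub1; apply: divr_gt0.
rewrite (eq_bigr (fun t => p t * g t / S - p t)); last first.
  by move=> t _; rewrite mulrBr mulr1 mulrA.
rewrite sumrB -mulr_suml p1 -/S divff ?subrr //; lra.
Qed.

Lemma logsum (I : finType) (w q : I -> R) :
  (forall i, 0 <= w i) -> (forall i, 0 <= q i) -> (forall i, 0 < w i -> 0 < q i) ->
  (\sum_i w i) * ln ((\sum_i w i) / (\sum_i q i)) <= \sum_i w i * ln (w i / q i).
Proof.
move=> w0 q0 wq.
set S := \sum_i w i; set T := \sum_i q i.
have S0 : 0 <= S by apply: sumr_ge0.
have [Sz|Sp] := eqVneq S 0.
  have wz : forall i, w i = 0.
    move=> i; apply/eqP; move: Sz => /eqP; rewrite psumr_eq0 //.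
    by move=> /allP /(_ i (mem_index_enum i)) /implyP ->.
  rewrite Sz mul0r; apply: sumr_ge0 => i _; by rewrite wz mul0r.
have Spos : 0 < S by rewrite lt_def Sp S0.
have [i0 wi0] : exists i, 0 < w i.
  apply/not_existsP => h; move: Sp; rewrite /S big1 ?eqxx //.
  move=> i _; have := h i; have := w0 i; rewrite le_eqVlt => /orP[/eqP<-//|->//].
have Tpos : 0 < T.
  rewrite /T (bigD1 i0) //=; apply: ltr_pwDl; first exact: wq.
  by apply: sumr_ge0.
have term : forall i, w i * ln (S / T) + w i - q i * S / T <= w i * ln (w i / q i).
  move=> i; have := w0 i; rewrite le_eqVlt => /orP[/eqP<-|wi].
    rewrite !mul0r add0r sub0r oppr_le0; apply: divr_ge0; [exact: mulr_ge0| lra].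
  have qi := wq i wi.
  have H := @ln_le_sub1 ((S / T) / (w i / q i)) (divr_gt0 (divr_gt0 Spos Tpos) (divr_gt0 wi qi)).
  rewrite ln_div ?posrE ?divr_gt0 // in H.
  have e : w i * ((S / T) / (w i / q i) - 1) = q i * S / T - w i.
    by field; rewrite ?(gt_eqF qi) ?(gt_eqF wi) ?(gt_eqF Tpos).
  have := ler_wpM2l (ltW wi) H; rewrite e mulrBr; lra.
apply: le_trans (ler_sum _ (fun i _ => term i)).
rewrite !sumrB -mulr_suml -/S -!mulr_suml -/T.
have -> : T * S / T = S by field; rewrite ?(gt_eqF Tpos).
by rewrite big_split /= -mulr_suml -/S addrK.
Qed.

End Gen.

Local Open Scope classical_set_scope.
Local Open Scope ring_scope.

Section Main.
Variables (R : realType) (A : finType) (P M : A -> R) (rho : A -> A -> R) (n : nat).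
Variable (C : {set n.-tuple A}).
Hypotheses (Ppmf : is_pmf P) (Ppos : forall a, 0 < P a) (Mpos : forall a, 0 < M a).
Hypothesis n0 : (0 < n)%N.
Variable f : n.-tuple A -> n.-tuple A.
Hypothesis fC : forall x, f x \in C.

Lemma tuple_distr (F : 'I_n -> A -> R) :
  \sum_(x : n.-tuple A) \prod_i F i (tnth x i) = \prod_i \sum_a F i a.
Proof.
rewrite bigA_distr_bigA /=.
rewrite (reindex (fun x : n.-tuple A => [ffun i => tnth x i])) /=.
  by apply: eq_bigr => x _; apply: eq_bigr => i _; rewrite ffunE.
exists (fun g : {ffun 'I_n -> A} => [tuple g i | i < n]).
  by move=> x _; apply: eq_from_tnth => i; rewrite tnth_mktuple ffunE.
by move=> g _; apply/ffunP => i; rewrite ffunE tnth_mktuple.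
Qed.

Lemma prodn_gt0 (x : n.-tuple A) : 0 < prodn P x.
Proof. by apply: prodr_gt0 => i _; apply: Ppos. Qed.

Lemma prodn_sum1 : \sum_(x : n.-tuple A) prodn P x = 1.
Proof.
rewrite /prodn (tuple_distr (fun _ => P)); apply: big1 => i _; exact: Ppmf.2.
Qed.

Definition Wi (i : 'I_n) (ab : A * A) : R :=
  \sum_(x : n.-tuple A | (tnth x i == ab.1) && (tnth (f x) i == ab.2)) prodn P x.
Definition Qi (i : 'I_n) (b : A) : R := \sum_a Wi i (a, b).

Lemma Wi_ge0 i ab : 0 <= Wi i ab.
Proof. by apply: sumr_ge0 => x _; apply: ltW; apply: prodn_gt0. Qed.

Lemma Wi_gt0 i x : 0 < Wi i (tnth x i, tnth (f x) i).
Proof.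
rewrite /Wi (bigD1 x) ?eqxx //=; apply: ltr_pwDl; first exact: prodn_gt0.
by apply: sumr_ge0 => y _; apply: ltW; apply: prodn_gt0.
Qed.

Lemma Wi_le_Qi i a b : Wi i (a, b) <= Qi i b.
Proof.
rewrite /Qi (bigD1 a) //= lerDl.
by apply: sumr_ge0 => c _; apply: Wi_ge0.
Qed.

Lemma Qi_ge0 i b : 0 <= Qi i b.
Proof. by apply: sumr_ge0 => c _; apply: Wi_ge0. Qed.

Lemma SumW i (g : A * A -> R) :
  \sum_ab Wi i ab * g ab = \sum_x prodn P x * g (tnth x i, tnth (f x) i).
Proof.
rewrite [RHS](partition_big (fun x => (tnth x i, tnth (f x) i)) predT) //=.
apply: eq_bigr => -[a b] _; rewrite /Wi mulr_suml; apply: eq_big => [x|x].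
  by rewrite xpair_eqE.
by move=> /andP[/eqP-> /eqP->].
Qed.

Lemma marg1 i a : \sum_b Wi i (a, b) = P a.
Proof.
have -> : \sum_b Wi i (a, b) = \sum_(x | tnth x i == a) prodn P x.
  by rewrite [RHS](partition_big (fun x => tnth (f x) i) predT).
rewrite big_mkcond /=.
have -> : P a = \prod_(j < n) \sum_c (if j == i then P c * (c == a)%:R else P c).
  rewrite (bigD1 i) //= eqxx.
  rewrite [X in _ * X]big1 ?mulr1; last by move=> j /negbTE ->; exact: Ppmf.2.
  rewrite (bigD1 a) //= eqxx mulr1 big1 ?addr0 // => c /negbTE ->.
  by rewrite mulr0.
rewrite -tuple_distr; apply: eq_bigr => x _.
rewrite /prodn (bigD1 i) //= [in RHS](bigD1 i) //= eqxx.
rewrite [X in _ = _ * X](eq_bigr (fun j => P (tnth x j))); last by move=> j /= /negbTE ->.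
by case: (tnth x i == a); rewrite ?mulr1 ?mulr0 ?mul0r.
Qed.

Definition Wb (ab : A * A) : R := n%:R^-1 * \sum_i Wi i ab.
Definition Qb (b : A) : R := n%:R^-1 * \sum_i Qi i b.

Lemma n_neq0 : (n%:R : R) != 0.
Proof. by rewrite pnatr_eq0 -lt0n. Qed.

Lemma WbE (g : A * A -> R) : \sum_ab Wb ab * g ab =
  n%:R^-1 * \sum_i \sum_x prodn P x * g (tnth x i, tnth (f x) i).
Proof.
rewrite /Wb; under eq_bigr do rewrite -mulrA mulr_suml.
rewrite -mulr_sumr exchange_big /=; congr (_ * _).
by apply: eq_bigr => i _; exact: SumW.
Qed.

Lemma avg_const (c : R) : n%:R^-1 * \sum_(i < n) c = c.
Proof. by rewrite sumr_const card_ord -[c *+ n]mulr_natl mulrA mulVf ?mul1r // n_neq0. Qed.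

Lemma Wb_pmf : is_pmf Wb.
Proof.
split.
  move=> ab; apply: mulr_ge0; first by rewrite invr_ge0 ler0n.
  by apply: sumr_ge0 => i _; apply: Wi_ge0.
have := WbE (fun _ => 1); under eq_bigr do rewrite mulr1.
move=> ->; under eq_bigr do under eq_bigr do rewrite mulr1.
under eq_bigr do rewrite prodn_sum1.
exact: avg_const.
Qed.

Lemma Wb_marg1 a : \sum_b Wb (a, b) = P a.
Proof.
rewrite /Wb -mulr_sumr exchange_big /=.
under eq_bigr do rewrite marg1.
exact: avg_const.
Qed.

Lemma Wb_marg2 b : \sum_a Wb (a, b) = Qb b.
Proof. by rewrite /Wb /Qb -mulr_sumr exchange_big. Qed.

Lemma Qb_pmf : is_pmf Qb.
Proof.
split.
  move=> b; apply: mulr_ge0; first by rewrite invr_ge0 ler0n.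
  by apply: sumr_ge0 => i _; apply: Qi_ge0.
under eq_bigr do rewrite -Wb_marg2.
rewrite exchange_big /=; under eq_bigr do rewrite Wb_marg1.
exact: Ppmf.2.
Qed.

Lemma Wb_dist : \sum_ab Wb ab * rho ab.1 ab.2 =
  \sum_x prodn P x * rhon rho x (f x).
Proof.
rewrite WbE exchange_big /= mulr_sumr; apply: eq_bigr => x _.
by rewrite /rhon -mulr_sumr mulrCA.
Qed.


Lemma KLE (S : finType) (mu nu : S -> R) :
  KL mu nu = \sum_s mu s * ln (mu s / nu s).
Proof. by apply: eq_bigr => s _; case: eqP => [->|]; rewrite ?mul0r. Qed.

Lemma Qi_gt0 i x : 0 < Qi i (tnth (f x) i).
Proof. exact: lt_le_trans (Wi_gt0 i x) (Wi_le_Qi _ _ _). Qed.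

Lemma KL_bound : KL Wb (fun ab => P ab.1 * Qb ab.2) <=
  n%:R^-1 * \sum_i \sum_ab Wi i ab * ln (Wi i ab / (P ab.1 * Qi i ab.2)).
Proof.
rewrite KLE exchange_big mulr_sumr /=; apply: ler_sum => -[a b] _ /=.
have L := @logsum R 'I_n (fun i => Wi i (a, b)) (fun i => P a * Qi i b)
  (fun i => Wi_ge0 i (a, b)) (fun i => mulr_ge0 (ltW (Ppos a)) (Qi_ge0 i b))
  (fun i w => mulr_gt0 (Ppos a) (lt_le_trans w (Wi_le_Qi i a b))).
have e : Wb (a, b) / (P a * Qb b) =
    (\sum_i Wi i (a, b)) / (\sum_i P a * Qi i b).
  rewrite /Wb /Qb mulrCA -mulr_sumr invfM mulrACA mulfV ?mul1r //.
  by rewrite invr_neq0 // n_neq0.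
rewrite e /Wb -mulrA; apply: ler_wpM2l L.
by rewrite invr_ge0 ler0n.
Qed.

Lemma lin_part : \sum_b Qb b * ln (M b) =
  n%:R^-1 * \sum_i \sum_ab Wi i ab * ln (M ab.2).
Proof.
rewrite /Qb; under eq_bigr do rewrite -mulrA mulr_suml.
rewrite -mulr_sumr exchange_big /=; congr (_ * _); apply: eq_bigr => i _.
rewrite /Qi; under eq_bigr do rewrite mulr_suml.
rewrite exchange_big /= pair_bigA; by apply: eq_bigr => -[a b] _.
Qed.

Definition G (x : n.-tuple A) : R := \prod_i
  (Wi i (tnth x i, tnth (f x) i) / (P (tnth x i) * Qi i (tnth (f x) i))
   * M (tnth (f x) i)).

Lemma G_gt0 x : 0 < G x.
Proof.
apply: prodr_gt0 => i _; apply: mulr_gt0 => //.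
apply: divr_gt0; first exact: Wi_gt0.
by apply: mulr_gt0 => //; apply: Qi_gt0.
Qed.

Lemma combine :
  \sum_i \sum_ab Wi i ab * ln (Wi i ab / (P ab.1 * Qi i ab.2)) +
  \sum_i \sum_ab Wi i ab * ln (M ab.2) = \sum_x prodn P x * ln (G x).
Proof.
rewrite -big_split /=; under eq_bigr do rewrite -big_split /=.
under eq_bigr do under eq_bigr do rewrite -mulrDr.
under eq_bigr do rewrite (SumW _ (fun ab => ln (Wi _ ab / (P ab.1 * Qi _ ab.2)) + ln (M ab.2))).
rewrite exchange_big /=; apply: eq_bigr => x _.
rewrite -mulr_sumr /G ln_prod; last first.
  move=> i; apply: mulr_gt0 => //; apply: divr_gt0; first exact: Wi_gt0.
  by apply: mulr_gt0 => //; apply: Qi_gt0.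
congr (_ * _); apply: eq_bigr => i _ /=.
have hp : 0 < Wi i (tnth x i, tnth (f x) i) / (P (tnth x i) * Qi i (tnth (f x) i)).
  apply: divr_gt0; first exact: Wi_gt0.
  by apply: mulr_gt0 => //; apply: Qi_gt0.
by rewrite [in RHS]lnM ?posrE.
Qed.

Lemma G_bound : \sum_x prodn P x * G x <= massn M C.
Proof.
pose H y x := \prod_i (Wi i (tnth x i, tnth y i) / Qi i (tnth y i)).
have e x : prodn P x * G x = prodn M (f x) * H (f x) x.
  rewrite /prodn /G /H -!big_split /=; apply: eq_bigr => i _.
  have := Ppos (tnth x i); have := Qi_gt0 i x => q p.
  by field; rewrite ?(gt_eqF q) ?(gt_eqF p).
under eq_bigr do rewrite e.
rewrite (partition_big f (fun y => y \in C)) //=.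
rewrite /massn; apply: ler_sum => y yC.
rewrite (eq_bigr (fun x => prodn M y * H y x)); last by move=> x /eqP ->.
rewrite -mulr_sumr -[X in _ <= X]mulr1; apply: ler_wpM2l.
  by apply: prodr_ge0 => i _; apply: ltW.
have H0 x : 0 <= H y x.
  by apply: prodr_ge0 => i _; apply: divr_ge0; [apply: Wi_ge0| apply: Qi_ge0].
apply: (le_trans (y := \sum_x H y x)).
  rewrite [X in X <= _]big_mkcond /=; apply: ler_sum => x _.
  by case: ifP => _.
rewrite /H (tuple_distr (fun i a => Wi i (a, tnth y i) / Qi i (tnth y i))).
apply: prodr_ile1 => i _; rewrite -mulr_suml.
change (\sum_a Wi i (a, tnth y i)) with (Qi i (tnth y i)).
have [->|Qn0] := eqVneq (Qi i (tnth y i)) 0; first by rewrite mul0r lexx ler01.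
by rewrite mulfV // lexx ler01.
Qed.

Variable x0 : n.-tuple A.

Lemma main_ineq : KL Wb (fun ab => P ab.1 * Qb ab.2) + \sum_b Qb b * ln (M b)
  <= n%:R^-1 * ln (massn M C).
Proof.
apply: le_trans (lerD KL_bound (lexx _)) _.
rewrite lin_part -mulrDr combine.
apply: ler_wpM2l; first by rewrite invr_ge0 ler0n.
apply: le_trans (jensen_ln prodn_gt0 prodn_sum1 G_gt0) _.
have S0 : 0 < \sum_x prodn P x * G x.
  rewrite (bigD1 x0) //=; apply: ltr_pwDl; first exact: mulr_gt0 (prodn_gt0 _) (G_gt0 _).
  by apply: sumr_ge0 => x _; apply: mulr_ge0; apply: ltW; [apply: prodn_gt0|apply: G_gt0].
have M0 : 0 < massn M C.
  rewrite /massn (bigD1 (f x0)) ?fC //=; apply: ltr_pwDl.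
    by apply: prodr_gt0 => i _.
  by apply: sumr_ge0 => y _; apply: prodr_ge0 => i _; apply: ltW.
by rewrite ler_ln ?posrE //; apply: G_bound.
Qed.

End Main.

Theorem theorem1 (R : realType) (A : finType) (P : A -> R)
    (rho : A -> A -> R) (M : A -> R) (n : nat) (C : {set n.-tuple A}) :
  is_pmf P -> (forall a, 0 < P a) ->
  (forall a b, 0 <= rho a b) -> (forall a, exists b, rho a b = 0) ->
  (forall a, 0 < M a) ->
  (0 < n)%N -> C != finset.set0 ->
  (Rrate rho P M (exp_dist rho P C) <= (n%:R^-1 * ln (massn M C))%:E)%E.
Proof.
move=> Ppmf Ppos _ _ Mpos n0 /set0Pn [y0 Hy0].
pose f x := [arg min_(y < y0 in C) rhon rho x y]%O.
have fC : forall x, f x \in C by move=> x; rewrite /f; case: arg_minP.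
have fmin : forall x y, y \in C -> rhon rho x (f x) <= rhon rho x y.
  by move=> x; rewrite /f; case: arg_minP => // z _ H y; apply: H.
set Wb' := Wb P f; set Qb' := Qb P f.
apply: (@le_trans _ _ (Irate rho P Qb' (exp_dist rho P C) + (\sum_b Qb' b * ln (M b))%:E)%E).
  by apply: ereal_inf_lbound; exists Qb' => //; apply: Qb_pmf.
apply: (@le_trans _ _ ((KL Wb' (fun ab => P ab.1 * Qb' ab.2) + \sum_b Qb' b * ln (M b))%:E)%E).
  rewrite EFinD; apply: leeD2r; apply: ereal_inf_lbound; exists Wb' => //.
  split; first exact: Wb_pmf.
  split; first exact: Wb_marg1.
  split; first exact: Wb_marg2.
  rewrite Wb_dist // /exp_dist; apply: ler_sum => x _.
  apply: ler_wpM2l; first exact: ltW (prodn_gt0 _ _).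
  apply: lb_le_inf; first by exists (rhon rho x y0), y0.
  by move=> _ [y Hy <-]; apply: fmin.
by rewrite lee_fin; apply: main_ineq.
Qed.
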